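(* Let $\mathcal{P}\subseteq\mathcal{S}\subseteq\mathcal{T}$ be group properties. If for every $G\in\mathcal{S}$ there exists $H\in\mathcal{P}$ such that the group $(\mathbb{N},G)$ embeds (as a group) into $(\mathbb{N},H)$, then $\mathcal{P}$ is dense in $\mathcal{S}$.
   Context: Let $\mathbb{N}^{\mathbb{N}\times\mathbb{N}}$ be the space of functions $\mathbb{N}\times\mathbb{N}\to\mathbb{N}$ with the product of discrete topologies. Let $\mathcal{A}=\{G\in\mathbb{N}^{\mathbb{N}\times\mathbb{N}}: G \text{ is an abelian group operation on } \mathbb{N} \text{ with identity element } 0\}$ and $\mathcal{T}=\{G\in\mathcal{A}: (\mathbb{N},G)\text{ is torsion-free}\}$, with the subspace topology. A set $\mathcal{P}\subseteq\mathcal{T}$ is a group property if it is isomorphism invariant: for any $G\in\mathcal{T}$, if $(\mathbb{N},G)$ is isomorphic to $(\mathbb{N},H)$ for some $H\in\mathcal{P}$, then $G\in\mathcal{P}$. *)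

(* Defs.v *)
From Stdlib Require Import List.
Import ListNotations.

Definition op := (nat * nat)%type -> nat.

Definition is_abelian_group_op (G : op) : Prop :=
  (forall x y z, G (G (x, y), z) = G (x, G (y, z))) /\
  (forall x y, G (x, y) = G (y, x)) /\
  (forall x, G (0, x) = x) /\
  (forall x, exists y, G (x, y) = 0).

Fixpoint mult (G : op) (n x : nat) : nat :=
  match n with
  | 0 => 0
  | S k => G (x, mult G k x)
  end.

Definition torsion_free (G : op) : Prop :=
  forall x n, x <> 0 -> 0 < n -> mult G n x <> 0.

Definition in_A (G : op) : Prop := is_abelian_group_op G.
Definition in_T (G : op) : Prop := in_A G /\ torsion_free G.

Definition is_hom (G H : op) (f : nat -> nat) : Prop :=
  forall x y, f (G (x, y)) = H (f x, f y).

Definition isomorphic (G H : op) : Prop :=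
  exists f : nat -> nat, is_hom G H f /\
    (forall x y, f x = f y -> x = y) /\ (forall y, exists x, f x = y).

Definition embeds (G H : op) : Prop :=
  exists f : nat -> nat, is_hom G H f /\ (forall x y, f x = f y -> x = y).

Definition group_property (P : op -> Prop) : Prop :=
  (forall G, P G -> in_T G) /\
  (forall G H, in_T G -> P H -> isomorphic G H -> P G).

(** Product of discrete topologies on N^(N x N): the basic open sets are the
    cylinders [{H | forall p in F, H p = G p}] for a finite set F of
    coordinates.  [P] is dense in [S] (w.r.t. the subspace topology) iff every
    basic open set meeting [S] meets [P], i.e. every point of [S] is in the
    closure of [P]. *)
Definition dense_in (P S : op -> Prop) : Prop :=
  forall G, S G -> forall F : list (nat * nat),
    exists H, P H /\ forall p, In p F -> H p = G p.

(* Main.v *)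
Require Import Defs.
From Stdlib Require Import List Arith Lia.
Import ListNotations.

Definition swp (a b y : nat) : nat :=
  if Nat.eq_dec y a then b else if Nat.eq_dec y b then a else y.

Lemma swp_inv a b y : swp a b (swp a b y) = y.
Proof.
  unfold swp; repeat (destruct Nat.eq_dec; subst; try congruence).
Qed.

Lemma ext_perm (f : nat -> nat) (finj : forall x y, f x = f y -> x = y) :
  forall D : list nat, exists s t : nat -> nat,
    (forall x, t (s x) = x) /\ (forall y, s (t y) = y) /\
    (forall d, In d D -> s d = f d).
Proof.
  induction D as [|x D IH].
  - exists (fun x => x), (fun x => x); repeat split; auto. intros d [].
  - destruct IH as [s [t [H1 [H2 H3]]]].
    destruct (in_dec Nat.eq_dec x D) as [Hin|Hnin].
    + exists s, t; repeat split; auto.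
      intros d [<-|Hd]; auto.
    + exists (fun y => swp (s x) (f x) (s y)), (fun y => t (swp (s x) (f x) y)).
      repeat split.
      * intros y; rewrite swp_inv; auto.
      * intros y; rewrite H2, swp_inv; auto.
      * intros d [<-|Hd].
        -- unfold swp; destruct Nat.eq_dec; congruence.
        -- rewrite (H3 d Hd). unfold swp.
           assert (d <> x) by (intro; subst; contradiction).
           destruct Nat.eq_dec as [e|].
           ++ exfalso. rewrite <- (H3 d Hd) in e.
              apply H. rewrite <- (H1 d), e; auto.
           ++ destruct Nat.eq_dec as [e|]; auto.
              exfalso; apply H; auto.
Qed.

Lemma mult_transfer (H : op) s t (H1 : forall x, t (s x) = x)
  (H2 : forall y, s (t y) = y) (s0 : s 0 = 0) :
  forall n x, mult (fun p => t (H (s (fst p), s (snd p)))) n x = t (mult H n (s x)).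
Proof.
  induction n; intros x; simpl.
  - rewrite <- s0, H1; auto.
  - rewrite IHn, H2; auto.
Qed.

Theorem lemma2p8 (P S : op -> Prop) :
  group_property P -> group_property S ->
  (forall G, P G -> S G) ->
  (forall G, S G -> exists H, P H /\ embeds G H) ->
  dense_in P S.
Proof.
  intros [PT Piso] [ST _] _ Hemb G SG F.
  destruct (Hemb G SG) as [H [PH [f [fhom finj]]]].
  destruct (PT H PH) as [[Ha [Hc [H0 Hi]]] Htf].
  destruct (ST G SG) as [[Ga [Gc [G0 Gi]]] _].
  assert (f0 : f 0 = 0).
  { destruct (Hi (f 0)) as [y Hy].
    assert (E : f 0 = H (f 0, f 0)) by (rewrite <- fhom, G0; auto).
    rewrite <- Hy at 2. rewrite E at 2. rewrite Ha, Hy, Hc, H0. reflexivity. }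
  destruct (ext_perm f finj (0 :: flat_map (fun p => [fst p; snd p; G p]) F))
    as [s [t [H1 [H2 H3]]]].
  assert (s0 : s 0 = 0) by (rewrite H3; simpl; auto).
  assert (sinj : forall x y, s x = s y -> x = y)
    by (intros x y e; rewrite <- (H1 x), e; auto).
  set (H' := fun p : nat * nat => t (H (s (fst p), s (snd p)))).
  exists H'. split.
  - apply (Piso H' H); [| exact PH |].
    + split; [repeat split|].
      * intros x y z; unfold H'; simpl; rewrite !H2, Ha; auto.
      * intros x y; unfold H'; simpl; rewrite Hc; auto.
      * intros x; unfold H'; simpl; rewrite s0, H0, H1; auto.
      * intros x; destruct (Hi (s x)) as [y Hy]; exists (t y);
          unfold H'; simpl; rewrite H2, Hy, <- s0, H1; auto.
      * intros x n Hx Hn e. unfold H' in e.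
        rewrite (mult_transfer H s t H1 H2 s0) in e.
        apply (Htf (s x) n); auto.
        -- intro e'; apply Hx, sinj; rewrite e', s0; auto.
        -- rewrite <- (H2 (mult H n (s x))), e; auto.
    + exists s; repeat split.
      * intros x y; unfold H'; simpl; rewrite H2; auto.
      * exact sinj.
      * intros y; exists (t y); auto.
  - intros [a b] Hp. unfold H'; simpl.
    assert (Hin : forall z, In z [a; b; G (a, b)] -> s z = f z).
    { intros z Hz; apply H3; right; apply in_flat_map; exists (a, b); auto. }
    rewrite !Hin by (simpl; auto).
    rewrite <- fhom, <- Hin by (simpl; auto). apply H1.
Qed.
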